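(* Let $n\ge1$ and $P=\{(i,j)\colon1\le i\le j\le n\}$ be the shifted staircase. Then $\sum_{p\in P}T_p^-\equiv^q \frac{\binom{n+1}{2}_q}{[2n]_q}$.
   Context: $P$ is ordered by $(i,j)\le(i',j')$ iff $i\le i'$ and $j\le j'$. $\mathcal{J}(P)$ is the set of order ideals. For $p\in P$, $I\in\mathcal{J}(P)$: $T_p^+(I)=1$ if $p$ is minimal in $P\setminus I$, else $0$; $T_p^-(I)=1$ if $p$ is maximal in $I$, else $0$; $T_p^q=T_p^+-qT_p^-$ with $q$ an indeterminate. For $f,g\colon\mathcal{J}(P)\to\mathbb{R}(q)$, $f\equiv^q g$ means $f-g=\sum_{p\in P}c_p(q)T_p^q$ for some $c_p(q)\in\mathbb{R}(q)$; an element of $\mathbb{R}(q)$ denotes a constant function. $[m]_q=1+q+\dots+q^{m-1}$, $[m]_q!=[m]_q[m-1]_q\cdots[1]_q$, and $\binom{m}{k}_q=\frac{[m]_q!}{[k]_q![m-k]_q!}$. *)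

(* Defs.v *)
From HB Require Import structures.
From mathcomp Require Import all_boot all_order all_algebra.
From mathcomp Require Import fraction.
From mathcomp Require Import reals.
Set Implicit Arguments. Unset Strict Implicit. Unset Printing Implicit Defensive.
Import Order.TTheory GRing.Theory Num.Theory.
Local Open Scope ring_scope.

Definition Rq (R : realType) := {fraction {poly R}}.
Definition qvar (R : realType) : Rq R := tofrac ('X : {poly R}).

Definition qint (R : realType) (m : nat) : Rq R := \sum_(i < m) qvar R ^+ i.
Definition qfact (R : realType) (m : nat) : Rq R := \prod_(i < m) qint R i.+1.
Definition qbinom (R : realType) (m k : nat) : Rq R :=
  qfact R m / (qfact R k * qfact R (m - k)).

Section Toggles.
Variables (T : finType) (le : rel T) (R : realType).
Definition plt (x y : T) := (x != y) && le x y.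
Definition is_ideal (I : {set T}) :=
  [forall x, forall y, (le x y && (y \in I)) ==> (x \in I)].
Definition ideals := {I : {set T} | is_ideal I}.
Definition Tplus (p : T) (I : ideals) : Rq R :=
  if (p \notin val I) && [forall y, plt y p ==> (y \in val I)] then 1 else 0.
Definition Tminus (p : T) (I : ideals) : Rq R :=
  if (p \in val I) && [forall y, plt p y ==> (y \notin val I)] then 1 else 0.
Definition Tq (p : T) (I : ideals) : Rq R := Tplus p I - qvar R * Tminus p I.
Definition qequiv (f g : ideals -> Rq R) : Prop :=
  exists c : T -> Rq R, forall I, f I - g I = \sum_(p : T) c p * Tq p I.
End Toggles.

(* Shifted staircase P = {(i,j) : 1 <= i <= j <= n}, encoded 0-indexed as
   pairs (i,j) of 'I_n with i <= j, ordered componentwise. *)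
Definition SSt (n : nat) := {p : 'I_n * 'I_n | (p.1 <= p.2)%N}.
Definition SSt_le (n : nat) : rel (SSt n) := fun p p' =>
  ((val p).1 <= (val p').1)%N && ((val p).2 <= (val p').2)%N.

(* Main.v *)
Require Import Defs.
From HB Require Import structures.
From mathcomp Require Import all_boot all_order all_algebra.
From mathcomp Require Import fraction reals.
From mathcomp Require Import ring zify.
Import GRing.Theory.
Local Open Scope ring_scope.
Set Implicit Arguments. Unset Strict Implicit.

Lemma qpow_neq1 (R : realType) k : (0 < k)%N -> qvar R ^+ k != 1.
Proof.
move=> hk; rewrite /qvar -tofracXn -tofrac1 tofrac_eq.
apply/eqP => /(congr1 (fun p : {poly R} => size p)).
by rewrite size_polyXn size_poly1; case: k hk.
Qed.

Lemma onepq_neq0 (R : realType) k : (0 < k)%N -> 1 + qvar R ^+ k != 0.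
Proof.
move=> hk; rewrite /qvar -tofracXn -tofrac1 -tofracD tofrac_eq0.
apply/eqP => /(congr1 (fun p : {poly R} => p`_0)).
rewrite coefD coef1 coefXn coef0 /=; case: k hk => // k _ /=.
by rewrite addr0; apply/eqP; rewrite oner_neq0.
Qed.

Lemma onemq_neq0 (R : realType) : 1 - qvar R != 0.
Proof. by rewrite subr_eq0 eq_sym -(expr1 (qvar R)) qpow_neq1. Qed.

Lemma qintE (R : realType) k : (1 - qvar R) * qint R k = 1 - qvar R ^+ k.
Proof.
elim: k => [|k IH]; first by rewrite /qint big_ord0 expr0 mulr0 subrr.
rewrite /qint big_ord_recr /= mulrDr -/(qint R k) IH exprS; ring.
Qed.

Lemma qint_neq0 (R : realType) k : (0 < k)%N -> qint R k != 0.
Proof.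
move=> hk; apply/eqP => h; have := qintE R k; rewrite h mulr0 => /eqP.
by rewrite eq_sym subr_eq0 eq_sym (negbTE (qpow_neq1 R hk)).
Qed.
Definition gamF (F : fieldType) (q : F) n : F := ((1 - q) * (1 + q ^+ n))^-1.
Definition ccF (F : fieldType) (q : F) n (a b : nat) : F :=
  if (a < b)%N then (1 - q)^-1 - gamF q n * (q ^+ a + q ^+ b)
  else q / ((1 - q) * (1 + q)) - gamF q n * q ^+ a.
Definition ffF (F : fieldType) (q : F) n a b : F := 1 + q * ccF q n a b.

Definition AvalF (F : fieldType) (q : F) n i j : F :=
  if (0 < i)%N then ffF q n i.-1 j else if (j.+1 < n)%N then ccF q n 0 j.+1 else 0.
Definition BvalF (F : fieldType) (q : F) n i j : F :=
  if j == i then 0 else if j == i.+1 then ffF q n i i + ccF q n i.+1 i.+1 else ffF q n i j.-1.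

Lemma local_id1 (F : fieldType) (q : F) i d (h1 : 1 - q != 0) (h2 : 1 + q != 0) :
  1 + q ^+ (i + d).+1 != 0 ->
  ffF q (i + d).+1 i (i + d) + ccF q (i + d).+1 i (i + d) = AvalF q (i + d).+1 i (i + d) + BvalF q (i + d).+1 i (i + d).
Proof.
  rewrite /AvalF /BvalF /ffF /ccF /gamF.
  case: i => [|i]; (case: d => [|[|d]]) => /= h3;
  repeat (case: ifP => /= ?; try (exfalso; lia)).
  all: rewrite ?addnS ?addn0 ?add0n ?addSn /=; rewrite ?exprS ?exprD ?exprS ?expr0 ?mulr1.
  all: rewrite ?exprS ?exprD ?exprS ?expr0 ?mulr1 in h3.
  all: revert h3; try (generalize (q ^+ i)); try (generalize (q ^+ d)); try (generalize (q ^+ e)); intros.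
  all: field; repeat (apply/andP; split); rewrite ?h1 ?h2 //; move: h3; apply: contra => /eqP E; apply/eqP; rewrite -E; ring.
Qed.

Lemma local_id2 (F : fieldType) (q : F) i d e (h1 : 1 - q != 0) (h2 : 1 + q != 0) :
  1 + q ^+ (i + d + e.+2) != 0 ->
  ffF q (i + d + e.+2) i (i + d) + ccF q (i + d + e.+2) i (i + d) = AvalF q (i + d + e.+2) i (i + d) + BvalF q (i + d + e.+2) i (i + d).
Proof.
  rewrite /AvalF /BvalF /ffF /ccF /gamF.
  case: i => [|i]; (case: d => [|[|d]]) => /= h3;
  repeat (case: ifP => /= ?; try (exfalso; lia)).
  all: rewrite ?addnS ?addn0 ?add0n ?addSn /=; rewrite ?exprS ?exprD ?exprS ?expr0 ?mulr1.
  all: rewrite ?exprS ?exprD ?exprS ?expr0 ?mulr1 in h3.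
  all: revert h3; try (generalize (q ^+ i)); try (generalize (q ^+ d)); try (generalize (q ^+ e)); intros.
  all: field; repeat (apply/andP; split); rewrite ?h1 ?h2 //; move: h3; apply: contra => /eqP E; apply/eqP; rewrite -E; ring.
Qed.

Lemma local_id (F : fieldType) (q : F) n i j (h1 : 1 - q != 0) (h2 : 1 + q != 0)
  (h3 : 1 + q ^+ n != 0) :
  (i <= j)%N -> (j < n)%N ->
  ffF q n i j + ccF q n i j = AvalF q n i j + BvalF q n i j.
Proof.
move=> hij hjn.
have [d ej] : exists d, j = (i + d)%N by exists (j - i)%N; lia.
subst j.
case: (ltngtP n (i + d).+1) => h; first lia.
- have [e en] : exists e, n = (i + d + e.+2)%N by exists (n - (i+d).+2)%N; lia.
  subst n; exact: local_id2.
- subst n; exact: local_id1.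
Qed.
Definition Tmb (T : finType) (le : rel T) (p : T) (J : ideals le) :=
  (p \in val J) && [forall y, plt le p y ==> (y \notin val J)].
Definition Tpb (T : finType) (le : rel T) (p : T) (J : ideals le) :=
  (p \notin val J) && [forall y, plt le y p ==> (y \in val J)].

Lemma pltxx (T : finType) (le : rel T) x : plt le x x = false.
Proof. by rewrite /plt eqxx. Qed.

Lemma G_point (T : finType) (le : rel T) (R : realType) (f g : T -> Rq R)
  (I I' : ideals le) (x p : T) :
  x \in val I -> (forall y, plt le x y -> y \notin val I) ->
  (forall y, le y x -> y \in val I) -> (forall y, (y \in val I') = (y != x) && (y \in val I)) ->
  f p * Tminus R p I - g p * Tplus R p I =
  f p * Tminus R p I' - g p * Tplus R p I' + (if p == x then f x + g x else 0)
  - (if plt le p x && Tmb p I' then f p else 0)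
  - (if plt le x p && Tpb p I then g p else 0).
Proof.
move=> xI xmax xdown memI'.
rewrite /Tminus /Tplus -/(Tmb p I) -/(Tmb p I') -/(Tpb p I) -/(Tpb p I').
have [->|pnx] := eqVneq p x.
- have h1 : Tmb x I by rewrite /Tmb xI /=; apply/forallP => y; apply/implyP; exact: xmax.
  have h2 : Tmb x I' = false by rewrite /Tmb memI' eqxx.
  have h3 : Tpb x I = false by rewrite /Tpb xI.
  have h4 : Tpb x I'.
    rewrite /Tpb memI' eqxx /=; apply/forallP => y; apply/implyP => /andP[ynx lyx].
    by rewrite memI' ynx xdown.
  rewrite h1 h2 h3 h4 !pltxx /= ?eqxx; ring.
- have e1 : Tmb p I = Tmb p I' && ~~ plt le p x.
    rewrite /Tmb memI' pnx /=.
    case: (p \in val I) => //=.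
    apply/idP/idP.
    + move/forallP => H; apply/andP; split.
      * apply/forallP => y; apply/implyP => hy; rewrite memI' negb_and.
        by rewrite (implyP (H y) hy) orbT.
      * by apply/negP => hpx; move: (implyP (H x) hpx); rewrite xI.
    + case/andP => /forallP H hpx; apply/forallP => y; apply/implyP => hy.
      move: (implyP (H y) hy); rewrite memI' negb_and negbK.
      case/orP => // /eqP eyx; by move: hpx; rewrite -eyx hy.
  have e2 : Tpb p I' = Tpb p I && ~~ plt le x p.
    rewrite /Tpb memI' pnx /=.
    case: (p \in val I) => //=.
    apply/idP/idP.
    + move/forallP => H; apply/andP; split.
      * apply/forallP => y; apply/implyP => hy.
        by move: (implyP (H y) hy); rewrite memI' => /andP[].
      * by apply/negP => hxp; move: (implyP (H x) hxp); rewrite memI' eqxx.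
    + case/andP => /forallP H hxp; apply/forallP => y; apply/implyP => hy.
      rewrite memI' (implyP (H y) hy) andbT.
      by apply/eqP => eyx; move: hxp; rewrite -eyx hy.
  rewrite e1 e2 ?(negbTE pnx).
  case: (Tmb p I'); case: (plt le p x); case: (Tpb p I); case: (plt le x p) => /=; ring.
Qed.

Lemma G_step (T : finType) (le : rel T) (R : realType) (f g : T -> Rq R)
  (I I' : ideals le) (x : T) :
  x \in val I -> (forall y, plt le x y -> y \notin val I) ->
  (forall y, le y x -> y \in val I) -> (forall y, (y \in val I') = (y != x) && (y \in val I)) ->
  \sum_p (f p * Tminus R p I - g p * Tplus R p I) =
  \sum_p (f p * Tminus R p I' - g p * Tplus R p I') + (f x + g x)
  - \sum_p (if plt le p x && Tmb p I' then f p else 0)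
  - \sum_p (if plt le x p && Tpb p I then g p else 0).
Proof.
move=> h1 h2 h3 h4.
rewrite (eq_bigr _ (fun p _ => G_point f g p h1 h2 h3 h4)).
rewrite !sumrB big_split /=; congr (_ - _ - _); congr (_ + _); first by rewrite sumrB.
by rewrite (bigD1 x) //= ?eqxx big1 ?addr0 // => p /negbTE ->.
Qed.

Definition rr n (p : SSt n) : nat := (val p).1.
Definition ss n (p : SSt n) : nat := (val p).2.

Lemma rs_inj n (p y : SSt n) : rr p = rr y -> ss p = ss y -> p = y.
Proof.
move=> h1 h2; apply: val_inj; move: h1 h2; rewrite /rr /ss.
case: (val p) => a b; case: (val y) => c d /= h1 h2.
by congr pair; apply: val_inj.
Qed.

Lemma rs_valid n (p : SSt n) : ((rr p <= ss p) && (ss p < n))%N.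
Proof. by rewrite /rr /ss (valP p) ltn_ord. Qed.

Lemma cell_ex n a b : (a <= b)%N -> (b < n)%N -> exists p : SSt n, rr p = a /\ ss p = b.
Proof.
move=> hab hb.
have ha : (a < n)%N by apply: leq_ltn_trans hb.
by exists (exist (fun p : 'I_n * 'I_n => (p.1 <= p.2)%N) (Ordinal ha, Ordinal hb) hab).
Qed.

Lemma pltE n (p y : SSt n) : plt (@SSt_le n) p y =
  ((rr p != rr y) || (ss p != ss y)) && (rr p <= rr y)%N && (ss p <= ss y)%N.
Proof.
rewrite /plt /SSt_le -/(rr p) -/(rr y) -/(ss p) -/(ss y) andbA; congr (_ && _ && _).
apply/idP/idP.
- apply: contraR; rewrite negb_or !negbK => /andP[/eqP h1 /eqP h2].
  by rewrite (rs_inj h1 h2).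
- by apply: contraL => /eqP ->; rewrite !eqxx.
Qed.

Lemma ideal_down n (J : ideals (@SSt_le n)) (y p : SSt n) :
  y \in val J -> (rr p <= rr y)%N -> (ss p <= ss y)%N -> p \in val J.
Proof.
move=> yJ h1 h2; have := valP J => /forallP /(_ p) /forallP /(_ y) /implyP; apply.
by rewrite /SSt_le -/(rr p) -/(rr y) -/(ss p) -/(ss y) h1 h2.
Qed.

Definition inJ n (J : ideals (@SSt_le n)) a b :=
  [exists p, (p \in val J) && (rr p == a) && (ss p == b)].

Lemma inJP n (J : ideals (@SSt_le n)) a b :
  reflect (exists p, [/\ p \in val J, rr p = a & ss p = b]) (inJ J a b).
Proof.
apply: (iffP existsP) => [[p /andP[/andP[h1 /eqP h2] /eqP h3]]|[p [h1 h2 h3]]].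
  by exists p.
by exists p; rewrite h1 h2 h3 !eqxx.
Qed.

Lemma inJ_valid n (J : ideals (@SSt_le n)) a b : inJ J a b -> ((a <= b) && (b < n))%N.
Proof. by case/inJP => p [_ <- <-]; exact: rs_valid. Qed.

Lemma sum_pt (R : realType) n (P : pred (SSt n)) (F : nat -> nat -> Rq R) a b :
  (forall p, P p -> rr p = a /\ ss p = b) ->
  \sum_p (if P p then F (rr p) (ss p) else 0) = if [exists p, P p] then F a b else 0.
Proof.
move=> H; case: existsP => [[p0 Hp0]|Hn].
- rewrite (bigD1 p0) //= Hp0 big1 ?addr0; first by have [-> ->] := H p0 Hp0.
  move=> p pn; case: ifP => // Pp.
  have [h1 h2] := H p Pp; have [h3 h4] := H p0 Hp0.
  have e : p = p0 by apply: rs_inj; rewrite ?h1 ?h2 ?h3 ?h4.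
  by rewrite e eqxx in pn.
- by rewrite big1 // => p _; case: ifP => // Pp; case: Hn; exists p.
Qed.

Lemma sum_split (R : realType) (T : finType) (P Q : pred T) (F : T -> Rq R) :
  \sum_p (if P p then F p else 0) =
  \sum_p (if P p && Q p then F p else 0) + \sum_p (if P p && ~~ Q p then F p else 0).
Proof.
rewrite -big_split; apply: eq_bigr => p _.
by case: (P p); case: (Q p) => /=; rewrite ?addr0 ?add0r.
Qed.

Lemma neqE n (p y : SSt n) : (p != y) = (rr p != rr y) || (ss p != ss y).
Proof.
apply/idP/idP.
- apply: contraR; rewrite negb_or !negbK => /andP[/eqP h1 /eqP h2].
  by rewrite (rs_inj h1 h2).
- by apply: contraL => /eqP ->; rewrite !eqxx.
Qed.

Lemma ID1 n (I I' : ideals (@SSt_le n)) (x p : SSt n) :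
  x \in val I -> (forall y, (y \in val I') = (y != x) && (y \in val I)) ->
  plt (@SSt_le n) p x -> Tmb p I' ->
  ((0 < rr x) && (rr p == (rr x).-1) && (ss p == ss x))%N ||
  ((rr x < ss x) && (rr p == rr x) && (ss p == (ss x).-1))%N.
Proof.
move=> xI memI' hpx /andP[pI' /forallP H].
have key y : plt (@SSt_le n) p y -> (rr y <= rr x)%N -> (ss y <= ss x)%N -> y = x.
  move=> hpy h1 h2; move: (implyP (H y) hpy); rewrite memI' (ideal_down xI h1 h2) andbT negbK.
  by move/eqP.
move: hpx; rewrite pltE => hpx.
have vp := rs_valid p; have vx := rs_valid x.
case: (ltnP (rr p) (rr x)) => h1.
- case: (ltnP (rr p) (ss p)) => h2.
  + have [y [ry sy]] := @cell_ex n (rr p).+1 (ss p) h2 (proj2 (andP vp)).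
    have ey' : y = x by apply: key; rewrite ?pltE ?ry ?sy; lia.
    move: ry sy; rewrite ey' => ry sy; lia.
  + have hb : (ss p < ss x)%N by lia.
    have [y [ry sy]] := @cell_ex n (rr p) (ss p).+1 ltac:(lia) ltac:(lia).
    have ey' : y = x by apply: key; rewrite ?pltE ?ry ?sy; lia.
    move: ry sy; rewrite ey' => ry sy; lia.
- have hb : (ss p < ss x)%N by lia.
  have [y [ry sy]] := @cell_ex n (rr p) (ss p).+1 ltac:(lia) ltac:(lia).
  have ey' : y = x by apply: key; rewrite ?pltE ?ry ?sy; lia.
  move: ry sy; rewrite ey' => ry sy; lia.
Qed.

Lemma ID2 n (I : ideals (@SSt_le n)) (x p : SSt n) :
  (forall y, plt (@SSt_le n) x y -> y \notin val I) ->
  plt (@SSt_le n) x p -> Tpb p I ->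
  (((ss x).+1 < n) && (rr p == rr x) && (ss p == (ss x).+1))%N ||
  ((rr x < ss x) && (rr p == (rr x).+1) && (ss p == ss x))%N.
Proof.
move=> xmax hxp /andP[pI /forallP H].
have key y : plt (@SSt_le n) y p -> (rr x <= rr y)%N -> (ss x <= ss y)%N -> y = x.
  move=> hyp h1 h2; have yI := implyP (H y) hyp.
  apply/eqP; apply: contraT => ynx.
  have : plt (@SSt_le n) x y by rewrite pltE h1 h2 !andbT; move: ynx; rewrite neqE; lia.
  by move/xmax; rewrite yI.
move: hxp; rewrite pltE => hxp.
have vp := rs_valid p; have vx := rs_valid x.
case: (ltnP (ss x) (ss p)) => h1.
- case: (ltnP (rr p) (ss p)) => h2.
  + have [y [ry sy]] := @cell_ex n (rr p) (ss p).-1 ltac:(lia) ltac:(lia).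
    have ey' : y = x by apply: key; rewrite ?pltE ?ry ?sy; lia.
    move: ry sy; rewrite ey' => ry sy; lia.
  + have [y [ry sy]] := @cell_ex n (rr p).-1 (ss p) ltac:(lia) ltac:(lia).
    have ey' : y = x by apply: key; rewrite ?pltE ?ry ?sy; lia.
    move: ry sy; rewrite ey' => ry sy; lia.
- have [y [ry sy]] := @cell_ex n (rr p).-1 (ss p) ltac:(lia) ltac:(lia).
  have ey' : y = x by apply: key; rewrite ?pltE ?ry ?sy; lia.
  move: ry sy; rewrite ey' => ry sy; lia.
Qed.

Lemma E1 n (I I' : ideals (@SSt_le n)) (x : SSt n) :
  x \in val I -> (forall y, plt (@SSt_le n) x y -> y \notin val I) ->
  (forall y, (y \in val I') = (y != x) && (y \in val I)) ->
  [exists p, (plt (@SSt_le n) p x && Tmb p I') &&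
     ((0 < rr x) && (rr p == (rr x).-1) && (ss p == ss x))%N] =
  (0 < rr x)%N && ~~ inJ I (rr x).-1 (ss x).+1.
Proof.
move=> xI xmax memI'.
have vx := rs_valid x.
apply/existsP/idP.
- case=> p /andP[/andP[hpx /andP[pI' /forallP H]] /andP[/andP[hi /eqP rp] /eqP sp]].
  rewrite hi /=; apply/negP => /inJP [z [zI rz sz]].
  have hz : plt (@SSt_le n) p z by rewrite pltE rp sp rz sz; lia.
  have := implyP (H z) hz; rewrite memI' zI andbT negbK => /eqP ezx.
  by move: sz; rewrite ezx; lia.
- case/andP => hi hna.
  have [p [rp sp]] := @cell_ex n (rr x).-1 (ss x) ltac:(lia) ltac:(lia).
  exists p; rewrite hi rp sp !eqxx !andbT /=.
  apply/andP; split; first by rewrite pltE rp sp; lia.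
  rewrite /Tmb memI' neqE rp sp (ideal_down xI) ?rp ?sp //; last by lia.
  rewrite andbT; apply/andP; split; first by lia.
  apply/forallP => y; apply/implyP; rewrite pltE rp sp => hy.
  rewrite memI' negb_and negbK; apply/orP.
  have vy := rs_valid y.
  case: (ltnP (ss x) (ss y)) => h.
  + right; apply/negP => yI; move/negP: hna; apply.
    have [z [rz sz]] := @cell_ex n (rr x).-1 (ss x).+1 ltac:(lia) ltac:(lia).
    apply/inJP; exists z; split => //.
    by apply: (ideal_down yI); rewrite ?rz ?sz; lia.
  + case: (eqVneq y x) => [->|ynx]; first by left.
    right; apply: xmax; rewrite pltE; move: ynx; rewrite neqE; lia.
Qed.

Lemma E2 n (I I' : ideals (@SSt_le n)) (x : SSt n) :
  x \in val I -> (forall y, plt (@SSt_le n) x y -> y \notin val I) ->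
  (forall y, (y \in val I') = (y != x) && (y \in val I)) ->
  [exists p, (plt (@SSt_le n) p x && Tmb p I') &&
     ~~ ((0 < rr x) && (rr p == (rr x).-1) && (ss p == ss x))%N] =
  (rr x < ss x)%N && ~~ inJ I (rr x).+1 (ss x).-1.
Proof.
move=> xI xmax memI'.
have vx := rs_valid x.
apply/existsP/idP.
- case=> p /andP[/andP[hpx hT] hq].
  have := ID1 xI memI' hpx hT; rewrite (negbTE hq) /= => /andP[/andP[hi /eqP rp] /eqP sp].
  move: hT => /andP[pI' /forallP H].
  rewrite hi /=; apply/negP => /inJP [z [zI rz sz]].
  have hz : plt (@SSt_le n) p z by rewrite pltE rp sp rz sz; lia.
  have := implyP (H z) hz; rewrite memI' zI andbT negbK => /eqP ezx.
  by move: rz; rewrite ezx; lia.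
- case/andP => hi hna.
  have [p [rp sp]] := @cell_ex n (rr x) (ss x).-1 ltac:(lia) ltac:(lia).
  exists p; rewrite rp sp.
  apply/andP; split; last by lia.
  apply/andP; split; first by rewrite pltE rp sp; lia.
  rewrite /Tmb memI' neqE rp sp (ideal_down xI) ?rp ?sp //; last by lia.
  rewrite andbT; apply/andP; split; first by lia.
  apply/forallP => y; apply/implyP; rewrite pltE rp sp => hy.
  rewrite memI' negb_and negbK; apply/orP.
  have vy := rs_valid y.
  case: (leqP (ss x) (ss y)) => h.
  + case: (eqVneq y x) => [->|ynx]; first by left.
    right; apply: xmax; rewrite pltE; move: ynx; rewrite neqE; lia.
  + right; apply/negP => yI; move/negP: hna; apply.
    have [z [rz sz]] := @cell_ex n (rr x).+1 (ss x).-1 ltac:(lia) ltac:(lia).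
    apply/inJP; exists z; split => //.
    by apply: (ideal_down yI); rewrite ?rz ?sz; lia.
Qed.

Lemma E3 n (I : ideals (@SSt_le n)) (x : SSt n) :
  x \in val I -> (forall y, plt (@SSt_le n) x y -> y \notin val I) ->
  [exists p, (plt (@SSt_le n) x p && Tpb p I) &&
     (((ss x).+1 < n) && (rr p == rr x) && (ss p == (ss x).+1))%N] =
  ((ss x).+1 < n)%N && ((rr x == 0)%N || inJ I (rr x).-1 (ss x).+1).
Proof.
move=> xI xmax.
have vx := rs_valid x.
apply/existsP/idP.
- case=> p /andP[/andP[hxp /andP[pI /forallP H]] /andP[/andP[hn /eqP rp] /eqP sp]].
  rewrite hn /=; case: (posnP (rr x)) => [->//|hi]; rewrite orbC; apply/orP; left.
  have [z [rz sz]] := @cell_ex n (rr x).-1 (ss x).+1 ltac:(lia) ltac:(lia).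
  apply/inJP; exists z; split => //.
  by apply: (implyP (H z)); rewrite pltE rz sz rp sp; lia.
- case/andP => hn ha.
  have [p [rp sp]] := @cell_ex n (rr x) (ss x).+1 ltac:(lia) ltac:(lia).
  have hxp : plt (@SSt_le n) x p by rewrite pltE rp sp; lia.
  exists p; rewrite rp sp hn !eqxx !andbT hxp /=.
  rewrite /Tpb (xmax _ hxp) /=.
  apply/forallP => y; apply/implyP; rewrite pltE rp sp => hy.
  have vy := rs_valid y.
  case: (leqP (ss y) (ss x)) => h.
  + by apply: (ideal_down xI); lia.
  + move: ha; case: (posnP (rr x)) => hi /=; first by lia.
    case/inJP => z [zI rz sz].
    by apply: (ideal_down zI); rewrite ?rz ?sz; lia.
Qed.

Lemma E4 n (I : ideals (@SSt_le n)) (x : SSt n) :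
  x \in val I -> (forall y, plt (@SSt_le n) x y -> y \notin val I) ->
  [exists p, (plt (@SSt_le n) x p && Tpb p I) &&
     ~~ (((ss x).+1 < n) && (rr p == rr x) && (ss p == (ss x).+1))%N] =
  (rr x < ss x)%N && (((rr x).+1 == ss x)%N || inJ I (rr x).+1 (ss x).-1).
Proof.
move=> xI xmax.
have vx := rs_valid x.
apply/existsP/idP.
- case=> p /andP[/andP[hxp hT] hq].
  have := ID2 xmax hxp hT; rewrite (negbTE hq) /= => /andP[/andP[hi /eqP rp] /eqP sp].
  move: hT => /andP[pI /forallP H].
  rewrite hi /=; case: (eqVneq (rr x).+1 (ss x)) => //= hne.
  have [z [rz sz]] := @cell_ex n (rr x).+1 (ss x).-1 ltac:(lia) ltac:(lia).
  apply/inJP; exists z; split => //.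
  by apply: (implyP (H z)); rewrite pltE rz sz rp sp; lia.
- case/andP => hi ha.
  have [p [rp sp]] := @cell_ex n (rr x).+1 (ss x) ltac:(lia) ltac:(lia).
  have hxp : plt (@SSt_le n) x p by rewrite pltE rp sp; lia.
  exists p; rewrite rp sp hxp /=.
  apply/andP; split; last by lia.
  rewrite /Tpb (xmax _ hxp) /=.
  apply/forallP => y; apply/implyP; rewrite pltE rp sp => hy.
  have vy := rs_valid y.
  case: (leqP (rr y) (rr x)) => h.
  + by apply: (ideal_down xI); lia.
  + move: ha; case: (eqVneq (rr x).+1 (ss x)) => hne /=; first by lia.
    case/inJP => z [zI rz sz].
    by apply: (ideal_down zI); rewrite ?rz ?sz; lia.
Qed.

Lemma K1 (F : fieldType) (q : F) n i j (h1 : 1 - q != 0) (h3 : 1 + q ^+ n != 0) :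
  (0 < i)%N -> (i <= j)%N -> ffF q n i.-1 j = ccF q n i j.+1.
Proof.
case: i => // i _ hij; rewrite /ffF /ccF /= ltnS.
have -> : (i < j)%N by lia.
rewrite /gamF !exprS.
move: h3; move: (q ^+ i) (q ^+ j) (q ^+ n) => u v w h3.
field. by rewrite h1 h3.
Qed.

Lemma K2 (F : fieldType) (q : F) n i j (h1 : 1 - q != 0) (h3 : 1 + q ^+ n != 0) :
  (i.+2 <= j)%N -> ffF q n i j.-1 = ccF q n i.+1 j.
Proof.
case: j => // j hij; rewrite /ffF /ccF /=.
have -> : (i < j)%N by lia.
have -> : (i.+1 < j.+1)%N by lia.
rewrite /gamF !exprS.
move: h3; move: (q ^+ i) (q ^+ j) (q ^+ n) => u v w h3.
field. by rewrite h1 h3.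
Qed.

Lemma combine (F : fieldType) (q : F) n i j (a b : bool)
  (h1 : 1 - q != 0) (h2 : 1 + q != 0) (h3 : 1 + q ^+ n != 0) :
  (i <= j)%N -> (j < n)%N -> (a -> j.+1 < n)%N -> (b -> i.+1 <= j.-1)%N ->
  ffF q n i j + ccF q n i j =
  (if (0 < i)%N && ~~ a then ffF q n i.-1 j else 0) +
  (if (i < j)%N && ~~ b then ffF q n i j.-1 else 0) +
  ((if (j.+1 < n)%N && ((i == 0)%N || a) then ccF q n i j.+1 else 0) +
  (if (i < j)%N && ((i.+1 == j)%N || b) then ccF q n i.+1 j else 0)).
Proof.
move=> hij hjn ha hb; rewrite local_id // /AvalF /BvalF.
have eA : (if (0 < i)%N then ffF q n i.-1 j else if (j.+1 < n)%N then ccF q n 0 j.+1 else 0) =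
  (if (0 < i)%N && ~~ a then ffF q n i.-1 j else 0) +
  (if (j.+1 < n)%N && ((i == 0)%N || a) then ccF q n i j.+1 else 0).
  case: (posnP i) => [->|hi] /=.
  - by rewrite add0r ?andbT.
  -
    case: a ha => /= ha.
    + by rewrite add0r (ha isT) K1.
    + by rewrite andbF addr0.
have eB : (if j == i then 0 else if j == i.+1 then ffF q n i i + ccF q n i.+1 i.+1 else ffF q n i j.-1) =
  (if (i < j)%N && ~~ b then ffF q n i j.-1 else 0) +
  (if (i < j)%N && ((i.+1 == j)%N || b) then ccF q n i.+1 j else 0).
  case: b hb => hb; rewrite /= ?andbT ?andbF ?orbT ?orbF;
  repeat (case: ifP => /= ?; try (exfalso; lia)); rewrite ?add0r ?addr0 //.
  all: try (have := hb isT; lia).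
  + apply: K2 => //; have := hb isT; lia.
  + have ej : j = i.+1 by lia.
    by subst j.
rewrite eA eB; ring.
Qed.

Lemma S1E (R : realType) n (I I' : ideals (@SSt_le n)) (x : SSt n) (Fn : nat -> nat -> Rq R) :
  x \in val I -> (forall y, plt (@SSt_le n) x y -> y \notin val I) ->
  (forall y, (y \in val I') = (y != x) && (y \in val I)) ->
  \sum_p (if plt (@SSt_le n) p x && Tmb p I' then Fn (rr p) (ss p) else 0) =
  (if (0 < rr x)%N && ~~ inJ I (rr x).-1 (ss x).+1 then Fn (rr x).-1 (ss x) else 0) +
  (if (rr x < ss x)%N && ~~ inJ I (rr x).+1 (ss x).-1 then Fn (rr x) (ss x).-1 else 0).
Proof.
move=> xI xmax memI'.
rewrite (sum_split _ (fun p => (0 < rr x) && (rr p == (rr x).-1) && (ss p == ss x))%N).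
rewrite (@sum_pt _ _ (fun p => (plt (@SSt_le n) p x && Tmb p I') &&
           ((0 < rr x) && (rr p == (rr x).-1) && (ss p == ss x))%N) _ (rr x).-1 (ss x)).
  rewrite (@sum_pt _ _ (fun p => (plt (@SSt_le n) p x && Tmb p I') &&
           ~~ ((0 < rr x) && (rr p == (rr x).-1) && (ss p == ss x))%N) _ (rr x) (ss x).-1).
    by rewrite (E1 xI xmax memI') (E2 xI xmax memI').
  move=> p /andP[/andP[hpx hT] hq].
  have := ID1 xI memI' hpx hT; rewrite (negbTE hq) /= => /andP[/andP[_ /eqP ->] /eqP ->].
  by [].
by move=> p /andP[_ /andP[/andP[_ /eqP ->] /eqP ->]].
Qed.

Lemma S2E (R : realType) n (I : ideals (@SSt_le n)) (x : SSt n) (Fn : nat -> nat -> Rq R) :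
  x \in val I -> (forall y, plt (@SSt_le n) x y -> y \notin val I) ->
  \sum_p (if plt (@SSt_le n) x p && Tpb p I then Fn (rr p) (ss p) else 0) =
  (if ((ss x).+1 < n)%N && ((rr x == 0)%N || inJ I (rr x).-1 (ss x).+1) then Fn (rr x) (ss x).+1 else 0) +
  (if (rr x < ss x)%N && (((rr x).+1 == ss x)%N || inJ I (rr x).+1 (ss x).-1) then Fn (rr x).+1 (ss x) else 0).
Proof.
move=> xI xmax.
rewrite (sum_split _ (fun p => ((ss x).+1 < n) && (rr p == rr x) && (ss p == (ss x).+1))%N).
rewrite (@sum_pt _ _ (fun p => (plt (@SSt_le n) x p && Tpb p I) &&
           (((ss x).+1 < n) && (rr p == rr x) && (ss p == (ss x).+1))%N) _ (rr x) (ss x).+1).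
  rewrite (@sum_pt _ _ (fun p => (plt (@SSt_le n) x p && Tpb p I) &&
           ~~ (((ss x).+1 < n) && (rr p == rr x) && (ss p == (ss x).+1))%N) _ (rr x).+1 (ss x)).
    by rewrite (E3 xI xmax) (E4 xI xmax).
  move=> p /andP[/andP[hxp hT] hq].
  have := ID2 xmax hxp hT; rewrite (negbTE hq) /= => /andP[/andP[_ /eqP ->] /eqP ->].
  by [].
by move=> p /andP[_ /andP[/andP[_ /eqP ->] /eqP ->]].
Qed.

Definition Gs (R : realType) n (J : ideals (@SSt_le n)) : Rq R :=
  \sum_p (ffF (qvar R) n (rr p) (ss p) * Tminus R p J - ccF (qvar R) n (rr p) (ss p) * Tplus R p J).

Lemma zmod_aux (V : zmodType) (G X A B C D : V) : X = A + B + (C + D) ->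
  G + X - (A + B) - (C + D) = G.
Proof. move=> ->. by rewrite addrA -[G + (A + B) + (C + D) - (A + B)]addrAC addrK addrK. Qed.

Lemma step (R : realType) n (hn : (0 < n)%N) (I I' : ideals (@SSt_le n)) (x : SSt n) :
  x \in val I -> (forall y, plt (@SSt_le n) x y -> y \notin val I) ->
  (forall y, (y \in val I') = (y != x) && (y \in val I)) -> Gs R I = Gs R I'.
Proof.
move=> xI xmax memI'.
have xdown y : SSt_le y x -> y \in val I.
  by move=> /andP[h1 h2]; exact: (ideal_down xI h1 h2).
have H : Gs R I = Gs R I' + (ffF (qvar R) n (rr x) (ss x) + ccF (qvar R) n (rr x) (ss x))
  - \sum_p (if plt (@SSt_le n) p x && Tmb p I' then ffF (qvar R) n (rr p) (ss p) else 0)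
  - \sum_p (if plt (@SSt_le n) x p && Tpb p I then ccF (qvar R) n (rr p) (ss p) else 0)
  := @G_step (SSt n) (@SSt_le n) R (fun p => ffF (qvar R) n (rr p) (ss p))
  (fun p => ccF (qvar R) n (rr p) (ss p)) I I' x xI xmax xdown memI'.
rewrite H.
rewrite (S1E (ffF (qvar R) n) xI xmax memI') (S2E (ccF (qvar R) n) xI xmax).
apply: zmod_aux.
have vx := rs_valid x.
apply: combine.
- exact: onemq_neq0.
- by have := onepq_neq0 R (ltn0Sn 0); rewrite expr1.
- exact: onepq_neq0.
- lia.
- lia.
- by move/inJ_valid; lia.
- by move/inJ_valid; lia.
Qed.

Lemma Gs_empty (R : realType) n (hn : (0 < n)%N) (I : ideals (@SSt_le n)) :
  val I = set0 -> Gs R I = - ccF (qvar R) n 0 0.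
Proof.
move=> e0.
have [z [rz sz]] := @cell_ex n 0 0 (leqnn 0) hn.
have -> : Gs R I = - \sum_p (if Tpb p I then ccF (qvar R) n (rr p) (ss p) else 0).
  rewrite /Gs -sumrN; apply: eq_bigr => p _.
  rewrite /Tminus /Tplus -/(Tpb p I) e0 in_set0 /=.
  by case: (Tpb p I); rewrite !mulr0 ?mulr1 ?sub0r ?oppr0.
rewrite (@sum_pt _ _ (fun p => Tpb p I) _ 0 0).
  suff -> : [exists p, Tpb p I] by [].
  apply/existsP; exists z; rewrite /Tpb e0 in_set0 /=.
  apply/forallP => y; apply/implyP; rewrite pltE rz sz; lia.
move=> p /andP[_ /forallP H].
have hz := implyP (H z); rewrite e0 in_set0 in hz.
have : ~~ plt (@SSt_le n) z p by apply/negP => /hz.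
have vp := rs_valid p.
rewrite pltE rz sz; lia.
Qed.

Lemma Gs_const (R : realType) n (hn : (0 < n)%N) (I : ideals (@SSt_le n)) :
  Gs R I = - ccF (qvar R) n 0 0.
Proof.
move: {2}#|val I| (erefl #|val I|) => k; elim: k I => [|k IH] I hk.
  by apply: Gs_empty => //; apply/eqP; rewrite -cards_eq0 hk.
have [y0 y0I] : exists y0, y0 \in val I by apply/card_gt0P; rewrite hk.
have [x xI xbig] := @arg_maxnP _ y0 (fun y => y \in val I) (fun y => rr y + ss y)%N y0I.
have xmax y : plt (@SSt_le n) x y -> y \notin val I.
  move=> hxy; apply/negP => yI; have := xbig y yI; move: hxy; rewrite pltE; lia.
have idI' : is_ideal (@SSt_le n) (val I :\ x).
  apply/forallP => a; apply/forallP => b; apply/implyP => /andP[hab].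
  rewrite !in_setD1 => /andP[bnx bI].
  have aI : a \in val I by move: hab => /andP[h1 h2]; exact: (ideal_down bI h1 h2).
  rewrite aI andbT; apply/negP => /eqP eax; subst a.
  by move: (xmax b); rewrite /plt eq_sym bnx hab bI => /(_ isT).
pose I' : ideals (@SSt_le n) := exist _ (val I :\ x) idI'.
have memI' y : (y \in val I') = (y != x) && (y \in val I) by rewrite /= in_setD1.
rewrite (@step R n hn I I' x xI xmax memI').
apply: IH; move: hk; rewrite (cardsD1 x) xI /=; lia.
Qed.

Lemma qintE' (R : realType) k : qint R k = (1 - qvar R ^+ k) / (1 - qvar R).
Proof. by rewrite -qintE [(1 - _) * _]mulrC mulfK // onemq_neq0. Qed.

Lemma qfact_neq0 (R : realType) m : qfact R m != 0.
Proof.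
elim: m => [|m IH]; first by rewrite /qfact big_ord0 oner_neq0.
rewrite /qfact big_ord_recr; apply: mulf_neq0; [exact: IH | exact: qint_neq0].
Qed.

Lemma onemqk_neq0 (R : realType) k : (0 < k)%N -> 1 - qvar R ^+ k != 0.
Proof. by move=> hk; rewrite subr_eq0 eq_sym qpow_neq1. Qed.

Lemma final_alg (F : fieldType) (Fm u q : F) :
  1 - q != 0 -> 1 + q != 0 -> 1 + q * u != 0 -> 1 - q * q != 0 ->
  1 - q * u * (q * u) != 0 -> Fm != 0 ->
  Fm * ((1 - q * u) / (1 - q)) * ((1 - q * (q * u)) / (1 - q)) /
  (1 * ((1 - q) / (1 - q)) * ((1 - q * q) / (1 - q)) * Fm) /
  ((1 - q * u * (q * u)) / (1 - q)) =
  - (q / ((1 - q) * (1 + q)) - ((1 - q) * (1 + q * u))^-1 * 1).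
Proof.
move=> n1 n2 n3 n4 n5 n6.
have n7 : 1 - q * u != 0.
  move: n5; apply: contra => /eqP E; apply/eqP.
  have -> : 1 - q * u * (q * u) = (1 - q * u) * (1 + q * u) by ring.
  by rewrite E mul0r.
field.
by rewrite n1 n2 n3 n4 n5 n6.
Qed.

Lemma qbinom_val (R : realType) n (hn : (0 < n)%N) :
  qbinom R n.+1 2 / qint R (2 * n) = - ccF (qvar R) n 0 0.
Proof.
case: n hn => // m _.
rewrite /qbinom (_ : (m.+2 - 2 = m)%N); last by lia.
have -> : qfact R m.+2 = qfact R m * qint R m.+1 * qint R m.+2.
  by rewrite /qfact !big_ord_recr.
have -> : qfact R 2 = 1 * qint R 1 * qint R 2.
  by rewrite /qfact !big_ord_recr big_ord0.
have n6 := qfact_neq0 R m.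
have n1 := onemq_neq0 R.
have n2 : 1 + qvar R ^+ 1 != 0 by apply: onepq_neq0.
have n3 : 1 + qvar R ^+ m.+1 != 0 by apply: onepq_neq0.
have n4 : 1 - qvar R ^+ 2 != 0 by apply: onemqk_neq0.
have n5 : 1 - qvar R ^+ (m.+1 + m.+1) != 0 by apply: onemqk_neq0.
rewrite !qintE' /ccF /gamF mul2n -addnn.
rewrite ltnn !expr0 !expr1.
rewrite !exprD !exprS in n3 n4 n5 *.
rewrite expr1 in n2 n4 *.
rewrite expr0 mulr1 in n4 *.
revert n1 n2 n3 n4 n5 n6.
move: (qfact R m) => Fm; move: (qvar R ^+ m) => u; move: (qvar R) => q.
exact: final_alg.
Qed.

Lemma fin_alg (F : comRingType) (a b c q : F) :
  a - ((1 + q * c) * a - c * b) = c * (b - q * a).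
Proof. ring. Qed.

Unset Implicit Arguments.

Theorem theorem5p15 (R : realType) (n : nat) (hn : (1 <= n)%N) :
  qequiv (fun I : ideals (@SSt_le n) => \sum_(p : SSt n) Tminus R p I)
         (fun _ => qbinom R n.+1 2 / qint R (2 * n)).
Proof.
exists (fun p => ccF (qvar R) n (rr p) (ss p)) => I.
rewrite (qbinom_val R hn) -(Gs_const R hn I) /Gs -sumrB.
apply: eq_bigr => p _.
exact: fin_alg.
Qed.
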